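(* Let $k\geq 1$ be an integer. The Laplacian spectrum of the spider $T(k,k)$ is $$\{0^{[1]},\ \theta^{[k-1]},\ \lambda_1^{[1]},\ \overline{\theta}^{[k-1]},\ \lambda_2^{[1]}\},$$ where $\theta=\frac{3-\sqrt{5}}{2}$, $\overline{\theta}=\frac{3+\sqrt{5}}{2}$, and $\lambda_1,\lambda_2$ are the roots of $x^2-(k+3)x+2k+1$.
   Context: For a graph $G$, the Laplacian matrix is $L(G)=D(G)-A(G)$, with $D(G)$ the diagonal degree matrix and $A(G)$ the adjacency matrix; its Laplacian spectrum is the multiset of eigenvalues of $L(G)$, and $a^{[m]}$ denotes the eigenvalue $a$ with multiplicity $m$. For integers $1\leq k\leq s$, the spider $T(s,k)$ is the tree obtained from the star $K_{1,s}$ by extending $k$ of its $s$ rays by one extra edge each; it has $s+k+1$ vertices. *)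

(* Defs.v *)
From HB Require Import structures.
From mathcomp Require Import all_boot all_order all_algebra.
Set Implicit Arguments. Unset Strict Implicit. Unset Printing Implicit Defensive.
Import Order.TTheory GRing.Theory Num.Theory.
Local Open Scope ring_scope.

(* Spider T(s,k) on vertex set 'I_(s+k+1):
   vertex 0 = centre; vertices 1..s = the s neighbours of the centre (the rays);
   vertices s+1..s+k = the extra vertices, vertex s+i being attached to vertex i
   (1 <= i <= k), i.e. rays 1..k are extended by one edge. *)
Definition spider_edge (s k i j : nat) : bool :=
  [|| (i == 0%N) && (0 < j <= s)%N,
      (j == 0%N) && (0 < i <= s)%N,
      (0 < i <= k)%N && (j == s + i)%N
    | (0 < j <= k)%N && (i == s + j)%N].

Definition spider_adj (s k : nat) : rel 'I_(s + k + 1) :=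
  fun i j => spider_edge s k i j.

Definition deg (T : finType) (e : rel T) (v : T) : nat := #|[set w | e v w]|.

Definition laplacian (R : nzRingType) (n : nat) (e : rel 'I_n) : 'M[R]_n :=
  \matrix_(i < n, j < n)
    ((if i == j then (deg e i)%:R else 0) - (if e i j then 1 else 0)).

Definition spectrum_is (R : nzRingType) (n : nat) (A : 'M[R]_n) (s : seq R) : Prop :=
  char_poly A = \prod_(a <- s) ('X - a%:P).

Arguments spider_adj : clear implicits.
Arguments laplacian R {n} e.

(* Main.v *)
Require Import Defs.
From HB Require Import structures.
From mathcomp Require Import all_boot all_order all_algebra fraction zify ring lra.
Import Order.TTheory GRing.Theory Num.Theory.
Local Open Scope ring_scope.

Lemma edge0 k l : spider_edge k k 0 l = (0 < l <= k)%N.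
Proof. rewrite /spider_edge; apply/idP/idP; lia. Qed.
Lemma edge_mid k r l : (0 < r <= k)%N -> spider_edge k k r l = (l == 0)%N || (l == k + r)%N.
Proof. move=> H; rewrite /spider_edge; apply/idP/idP; lia. Qed.
Lemma edge_leaf k r l : (k < r <= k + k)%N -> spider_edge k k r l = (l == r - k)%N.
Proof. move=> H; rewrite /spider_edge; apply/idP/idP; lia. Qed.
Lemma edge_diag k r : spider_edge k k r r = false.
Proof. rewrite /spider_edge; apply/idP/idP; lia. Qed.

Section Rows.
Variable R : nzRingType.
Definition E k r l : R := if spider_edge k k r l then 1 else 0.

Lemma sum_delta n p (g : nat -> R) : (p < n)%N ->
  \sum_(l < n) (nat_of_ord l == p)%:R * g l = g p.
Proof.
move=> Hp; rewrite (bigD1 (Ordinal Hp)) //= eqxx mul1r big1 ?addr0 //.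
move=> i; rewrite -val_eqE /= => /negbTE ->; by rewrite mul0r.
Qed.

Lemma row0 k (g : nat -> R) :
  \sum_(l < k + k + 1) E k 0 l * g l = \sum_(1 <= l < k + 1) g l.
Proof.
rewrite -(big_mkord xpredT (fun l => E k 0 l * g l)).
rewrite (@big_cat_nat _ _ _ (k + 1)) //=; last lia.
rewrite [X in _ + X]big_nat_cond [X in _ + X]big1 ?addr0; last first.
  move=> i /andP[/andP[H1 H2] _]; rewrite /E edge0.
  have -> : (0 < i <= k)%N = false by lia. by rewrite mul0r.
rewrite big_ltn; last lia.
rewrite {1}/E edge0 /= mul0r add0r big_nat_cond [RHS]big_nat_cond.
apply: eq_bigr => i /andP[H _]; rewrite /E edge0.
have -> : (0 < i <= k)%N = true by lia. by rewrite mul1r.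
Qed.

Lemma row_mid k r (g : nat -> R) : (0 < r <= k)%N ->
  \sum_(l < k + k + 1) E k r l * g l = g 0%N + g (k + r)%N.
Proof.
move=> H.
have e : forall l : 'I_(k+k+1), E k r l * g l = (nat_of_ord l == 0%N)%:R * g l + (nat_of_ord l == k + r)%N%:R * g l.
  move=> l; rewrite /E edge_mid //.
  case: (boolP (nat_of_ord l == 0%N)) => [/eqP->|h0] /=.
    have -> : (0 == k + r)%N = false by lia. by rewrite mul1r mul0r addr0.
  case: (boolP (nat_of_ord l == k + r)%N) => h1 /=; by rewrite ?mul1r ?mul0r ?add0r.
rewrite (eq_bigr _ (fun l _ => e l)) big_split /= !sum_delta //; lia.
Qed.

Lemma row_leaf k r (g : nat -> R) : (k < r <= k + k)%N ->
  \sum_(l < k + k + 1) E k r l * g l = g (r - k)%N.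
Proof.
move=> H.
have e : forall l : 'I_(k+k+1), E k r l * g l = (nat_of_ord l == r - k)%N%:R * g l.
  move=> l; rewrite /E edge_leaf //.
  by case: (nat_of_ord l == r - k)%N.
rewrite (eq_bigr _ (fun l _ => e l)) sum_delta //; lia.
Qed.
End Rows.

Lemma sum_delta_nat (R : nzRingType) m n p (g : nat -> R) : (m <= p < n)%N ->
  \sum_(m <= l < n) (l == p)%:R * g l = g p.
Proof.
move=> H; rewrite (@big_cat_nat _ _ _ p) /=; try lia.
rewrite (@big_cat_nat _ _ _ p.+1 p) /=; try lia.
rewrite big_nat1 eqxx mul1r.
rewrite big_nat_cond big1 ?add0r; last first.
  move=> i /andP[/andP[H1 H2] _]; have -> : (i == p) = false by lia. by rewrite mul0r.
rewrite big_nat_cond big1 ?addr0 //.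
move=> i /andP[/andP[H1 H2] _]; have -> : (i == p) = false by lia. by rewrite mul0r.
Qed.

Section Det.
Variable F : fieldType.
Variables (k : nat) (a b c : F).
Hypothesis c0 : c != 0.
Hypothesis p0 : b * c - 1 != 0.
Let d := (b * c - 1) / c.
Definition dg (r : nat) : F := if r == 0%N then a else if (r <= k)%N then b else c.
Definition Mf (r l : nat) : F := (r == l)%:R * dg r + E F k r l.
Definition Qf (l j : nat) : F :=
  if l == j then 1
  else if (j == 0%N) && (0 < l <= k)%N then - d^-1
  else if (j == 0%N) && (k < l)%N then (c * d)^-1
  else if (0 < j <= k)%N && (l == k + j)%N then - c^-1 else 0.
Definition Uf (r j : nat) : F :=
  if r == j then (if r == 0%N then a - k%:R / d else if (r <= k)%N then d else c)
  else if (r == 0%N) && (0 < j <= k)%N then 1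
  else if (0 < r <= k)%N && (j == k + r)%N then 1 else 0.
Definition Mmx : 'M[F]_(k + k + 1) := \matrix_(i, j) Mf i j.
Definition Qmx : 'M[F]_(k + k + 1) := \matrix_(i, j) Qf i j.
Definition Umx : 'M[F]_(k + k + 1) := \matrix_(i, j) Uf i j.

Lemma d0 : d != 0.
Proof. by rewrite /d mulf_neq0 ?invr_eq0. Qed.

Ltac ifs := repeat (let h := fresh in case: ifP => h; rewrite ?h /=); try (exfalso; lia); rewrite ?mulr1 ?mul1r ?mul0r ?mulr0 ?addr0 ?add0r; try done.

Ltac fld := rewrite /d; field; try (by rewrite ?c0 ?p0 ?mulf_neq0 ?invr_eq0 ?c0 ?p0).

Lemma MQ : Mmx *m Qmx = Umx.
Proof.
apply/matrixP => i j; rewrite !mxE.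
under eq_bigr => l _ do rewrite !mxE /Mf mulrDl.
rewrite big_split /=.
under eq_bigr => l _ do rewrite eq_sym -mulrA.
rewrite (@sum_delta _ _ _ (fun l => dg i * Qf l j)) //.
have Hi := ltn_ord i; have Hj := ltn_ord j.
have [Hi0|[Hmid|Hleaf]] : (nat_of_ord i == 0%N) \/ (0 < i <= k)%N \/ (k < i <= k+k)%N by lia.
- rewrite (eqP Hi0) (row0 _ k (fun l => Qf l j)).
  have [Hj0|[Hjm|Hjl]] : (nat_of_ord j == 0%N) \/ (0 < j <= k)%N \/ (k < j <= k+k)%N by lia.
  + rewrite (eqP Hj0) (@eq_big_nat _ _ _ _ _ _ (fun _ => - d^-1)); last first.
      by move=> l Hl; rewrite /Qf; ifs.
    rewrite sumr_const_nat /Qf /Uf /dg /= addnK.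
    rewrite mulNrn -mulr_natr; field; exact: d0.
  + rewrite (@eq_big_nat _ _ _ _ _ _ (fun l => (l == j)%:R * 1)); last first.
      by move=> l Hl; rewrite /Qf; ifs.
    rewrite (@sum_delta_nat _ 1 (k+1) j (fun _ => 1)); last lia.
    rewrite /Qf /Uf; ifs.
  + rewrite big_nat_cond big1; last first.
      by move=> l /andP[Hl _]; rewrite /Qf; ifs.
    rewrite /Qf /Uf; ifs.
- rewrite (row_mid _ _ _ (fun l => Qf l j)) //.
  rewrite /dg /Qf /Uf; ifs.
  1,2: fld.

- rewrite (row_leaf _ _ _ (fun l => Qf l j)) //.
  rewrite /dg /Qf /Uf; ifs.
  1,2: fld.
Qed.

Lemma detQ : \det Qmx = 1.
Proof.
rewrite det_trig; last first.
  apply/is_trig_mxP => i j H; rewrite mxE /Qf; ifs.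
by rewrite big1 // => i _; rewrite mxE /Qf eqxx.
Qed.

Lemma detU : \det Umx = (a - k%:R / d) * d ^+ k * c ^+ k.
Proof.
rewrite -det_tr det_trig; last first.
  apply/is_trig_mxP => i j H; rewrite !mxE /Uf; ifs.
under eq_bigr => i _ do rewrite !mxE /Uf eqxx.
rewrite -(big_mkord xpredT (fun i : nat => if i == 0%N then a - k%:R / d else if (i <= k)%N then d else c)).
rewrite big_ltn; last lia.
rewrite (@big_cat_nat _ _ _ (k + 1)) /=; try lia.
rewrite (@eq_big_nat _ _ _ 1 (k+1) _ (fun _ => d)); last by move=> l Hl; ifs.
rewrite (@eq_big_nat _ _ _ (k+1) (k+k+1) _ (fun _ => c)); last by move=> l Hl; ifs.
rewrite !prodr_const_nat addnK (_ : (k + k + 1 - (k + 1) = k)%N) ?mulrA //; lia.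
Qed.

Lemma detM : (0 < k)%N -> \det Mmx = (a * (b * c - 1) - k%:R * c) * (b * c - 1) ^+ k.-1.
Proof.
move=> Hk.
have := det_mulmx Mmx Qmx; rewrite MQ detQ detU mulr1 => <-.
case: k Hk => // k' _ /=.
rewrite -mulrA -exprMn exprS /d.
rewrite divfK //; set p := (_ ^+ k'); field; by rewrite c0.
Qed.
End Det.

Lemma degE (R0 : nzRingType) k (v : 'I_(k+k+1)) :
  (deg (spider_adj k k) v)%:R =
  (if nat_of_ord v == 0%N then k else if (nat_of_ord v <= k)%N then 2 else 1)%:R :> R0.
Proof.
rewrite /deg -sum1_card natr_sum big_mkcond /=.
rewrite (eq_bigr (fun w : 'I_(k+k+1) => E R0 k v w * (fun _ => 1) w)); last first.
  by move=> w _; rewrite inE /spider_adj /E; case: ifP; rewrite ?mulr1 ?mul0r.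
have Hv := ltn_ord v.
have [Hi0|[Hmid|Hleaf]] : (nat_of_ord v == 0%N) \/ (0 < v <= k)%N \/ (k < v <= k+k)%N by lia.
- by rewrite (eqP Hi0) (row0 _ k (fun _ => 1)) sumr_const_nat addnK eqxx.
- rewrite (row_mid _ _ _ (fun _ => 1)) //; have -> : (nat_of_ord v == 0%N) = false by lia.
  by rewrite (_ : (v <= k)%N = true) //; lia.
- rewrite (row_leaf _ _ _ (fun _ => 1)) //; have -> : (nat_of_ord v == 0%N) = false by lia.
  by rewrite (_ : (v <= k)%N = false) //; lia.
Qed.

Lemma prod_nseq (T : comNzRingType) (I : Type) n (x : I) (f : I -> T) :
  \prod_(y <- nseq n x) f y = f x ^+ n.
Proof. elim: n => [|n IH]; by rewrite ?big_nil ?expr0 // big_cons IH exprS. Qed.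

Theorem proposition3p1 (R : rcfType) (k : nat) (l1 l2 : R) :
  (1 <= k)%N ->
  ('X - l1%:P) * ('X - l2%:P) = 'X^2 - (k + 3)%:R *: 'X + (2 * k + 1)%:R%:P ->
  spectrum_is (laplacian R (spider_adj k k))
    ([:: 0]
     ++ nseq k.-1 ((3 - Num.sqrt 5) / 2)
     ++ [:: l1]
     ++ nseq k.-1 ((3 + Num.sqrt 5) / 2)
     ++ [:: l2]).
Proof.
move=> Hk Hl.
set th := (3 - Num.sqrt 5) / 2; set tb := (3 + Num.sqrt 5) / 2.
have s2 : Num.sqrt 5 ^+ 2 = 5 :> R by rewrite sqr_sqrtr // ler0n.
have h1 : th + tb = 3 by rewrite /th /tb; field.
have h2 : th * tb = 1.
  rewrite /th /tb (_ : _ * _ = (9 - Num.sqrt 5 ^+ 2) / 4); last by field.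
  by rewrite s2; field.
clearbody th tb.
pose A : {poly R} := 'X - (k%:R)%:P.
pose B : {poly R} := 'X - (2%:R)%:P.
pose C : {poly R} := 'X - (1%:R)%:P.
have q : ('X - th%:P) * ('X - tb%:P) = B * C - 1.
  transitivity ('X^2 - (th + tb)%:P * 'X + (th * tb)%:P); first by rewrite polyCD polyCM; ring.
  by rewrite h1 h2 /B /C !polyC_natr; ring.
have Hq : A * (B * C - 1) - k%:R * C = 'X * (('X - l1%:P) * ('X - l2%:P)).
  by rewrite Hl /A /B /C -mul_polyC !polyC_natr !natrD ?natrM; ring.
have Hrhs : \prod_(a <- [:: 0] ++ nseq k.-1 th ++ [:: l1] ++ nseq k.-1 tb ++ [:: l2]) ('X - a%:P)
    = (A * (B * C - 1) - k%:R * C) * (B * C - 1) ^+ k.-1.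
  rewrite Hq -q exprMn !big_cat /= !big_cons !big_nil !prod_nseq polyC0 subr0.
  set u := (_ ^+ k.-1); set v := (_ ^+ k.-1); ring.
rewrite /spectrum_is Hrhs.
apply/eqP; rewrite -(tofrac_eq); apply/eqP.
rewrite /char_poly -det_map_mx.
have eM : map_mx (@tofrac _) (char_poly_mx (laplacian R (spider_adj k k)))
    = @Mmx {fraction {poly R}} k (tofrac A) (tofrac B) (tofrac C).
  apply/matrixP => i j; rewrite !mxE /Mf /E /dg.
  case: (eqVneq i j) => [<-|ne].
    rewrite !eqxx /spider_adj edge_diag degE /= subr0 mul1r addr0.
    case: ifP => _; first by rewrite /A.
    by case: ifP => _; rewrite ?/B ?/C.
  have -> : (nat_of_ord i == j) = false by apply/negbTE; rewrite val_eqE.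
  rewrite /= mulr0n sub0r mul0r add0r /spider_adj.
  case: ifP => _; by rewrite add0r ?polyCN opprK ?oppr0 ?polyC0 ?polyC1 ?rmorph1 ?rmorph0.
have C0 : C != 0.
  apply/negP => /eqP h; have := congr1 (horner^~ 0) h.
  by rewrite /C !hornerE /= => /eqP; rewrite oppr_eq0 oner_eq0.
have P0 : B * C - 1 != 0.
  apply/negP => /eqP h; have := congr1 (horner^~ 0) h.
  rewrite /B /C !hornerE /= => /eqP.
  by rewrite mulrNN mulr1 (_ : 2%:R = 1 + 1 :> R) // addrK oner_eq0.
rewrite eM detM //; last first.
- by rewrite -tofracM -tofrac1 -tofracB tofrac_eq0.
- by rewrite tofrac_eq0.
by rewrite !(tofracM, tofracB, tofracXn, tofrac1, rmorph_nat).
Qed.
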